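(* Let $U$ be a finite nonempty set, $R$ an equivalence relation on $U$, and $M(R)$ the support matroid induced by $R$. For every $X\subseteq U$, $X$ is not a closed set of $M(R)$ if and only if $X$ is an $R$-rough set.
   Context: For $x\in U$, $RN(x)=\{y\in U\mid xRy\}$; $R_{*}(X)=\{x\in U\mid RN(x)\subseteq X\}$ and $R^{*}(X)=\{x\in U\mid RN(x)\cap X\neq\emptyset\}$. A set $X\subseteq U$ is $R$-precise if $R^{*}(X)=R_{*}(X)$, and $R$-rough otherwise. Let $\mathbf{S}(R)=\{X\subseteq U\mid R^{*}(X)=U\}$. The support matroid $M(R)=(U,\mathbf{I}(R))$ is the matroid on $U$ whose independent sets $\mathbf{I}(R)$ are the subsets of inclusion-minimal members of $\mathbf{S}(R)$. For a matroid $(U,\mathbf{I})$, the rank is $r(X)=\max\{|I|\mid I\subseteq X, I\in\mathbf{I}\}$, the closure is $cl(X)=\{e\in U\mid r(X)=r(X\cup\{e\})\}$, and $X$ is closed if $cl(X)=X$. *)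

(* Defs.v *)
(* U is a finite type T (the whole carrier), subsets are {set T}. *)
From mathcomp Require Import all_boot.
Set Implicit Arguments. Unset Strict Implicit. Unset Printing Implicit Defensive.

Section RoughMatroid.
Variables (T : finType) (R : rel T).

Definition RN (x : T) : {set T} := [set y | R x y].
Definition lower_approx (X : {set T}) : {set T} := [set x | RN x \subset X].
Definition upper_approx (X : {set T}) : {set T} := [set x | RN x :&: X != set0].
Definition R_precise (X : {set T}) : bool := upper_approx X == lower_approx X.
Definition R_rough (X : {set T}) : bool := ~~ R_precise X.

Definition SR : {set {set T}} := [set X | upper_approx X == setT].
Definition indep (I : {set T}) : bool :=
  [exists A : {set T}, minset (fun Y => Y \in SR) A && (I \subset A)].
Definition rank (X : {set T}) : nat :=
  \max_(I : {set T} | indep I && (I \subset X)) #|I|.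
Definition closure (X : {set T}) : {set T} :=
  [set e | rank X == rank (e |: X)].
Definition M_closed (X : {set T}) : bool := closure X == X.

End RoughMatroid.

(* Main.v *)
Require Import Defs.
From mathcomp Require Import all_boot.
Set Implicit Arguments. Unset Strict Implicit. Unset Printing Implicit Defensive.

Section S.
Variables (T : finType) (R : rel T).
Hypotheses (Rrefl : reflexive R) (Rsym : symmetric R) (Rtrans : transitive R).

Definition pw (B : {set T}) : bool :=
  [forall x in B, forall y in B, R x y ==> (x == y)].

Lemma pwP (B : {set T}) : reflect (forall x y, x \in B -> y \in B -> R x y -> x = y) (pw B).
Proof.
apply: (iffP forallP) => [H x y xB yB Rxy|H x].
  by move: (H x); rewrite xB /= => /forallP/(_ y); rewrite yB Rxy /= => /eqP.
apply/implyP=> xB; apply/forallP=> y; apply/implyP=> yB; apply/implyP=> Rxy.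
by apply/eqP; apply: H.
Qed.

Lemma indep_pw I : indep R I = pw I.
Proof.
apply/idP/idP.
- case/existsP=> A /andP[/minsetP[HA Hmin] IA].
  apply/pwP=> x y xI yI Rxy; apply/eqP/negPn/negP=> nxy.
  have xA := subsetP IA x xI; have yA := subsetP IA y yI.
  have : A :\ y \in SR R.
    rewrite inE; apply/eqP/setP=> z; rewrite !inE.
    move: HA; rewrite inE => /eqP/setP/(_ z); rewrite !inE => /set0Pn[w].
    rewrite !inE => /andP[Rzw wA].
    apply/set0Pn; case: (eqVneq w y) => [wy|wny].
      exists x; rewrite !inE xA andbT; apply/andP; split; last exact: nxy.
      have Ryx : R y x by rewrite Rsym.
      rewrite wy in Rzw; exact: Rtrans Rzw Ryx.
    by exists w; rewrite !inE wny Rzw wA.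
  move/Hmin => /(_ (subD1set A y))/setP/(_ y); by rewrite !inE eqxx yA.
- move=> pI; case: (maxset_exists pI) => B /maxsetP[pB Bmax] IB.
  apply/existsP; exists B; rewrite IB andbT; apply/minsetP; split.
    rewrite inE; apply/eqP/setP=> z; rewrite !inE.
    case: (eqVneq (RN R z :&: B) set0) => [Hz|//]; exfalso.
    have zB : z \notin B.
      apply/negP=> zB; move/setP: Hz => /(_ z); by rewrite !inE Rrefl zB.
    have : pw (z |: B).
      apply/pwP=> x y; rewrite !inE => /orP[/eqP->|xB] /orP[/eqP->|yB] Rxy //.
      + move/setP: Hz => /(_ y); by rewrite !inE Rxy yB.
      + move/setP: Hz => /(_ x); by rewrite !inE Rsym Rxy xB.
      + exact: (pwP _ pB).
    move/Bmax => /(_ (subsetUr _ _))/setP/(_ z); by rewrite !inE eqxx (negbTE zB).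
  move=> C; rewrite inE => /eqP/setP HC CB; apply/eqP; rewrite eqEsubset CB /=.
  apply/subsetP=> b bB; move: (HC b); rewrite !inE => /set0Pn[c]; rewrite !inE.
  case/andP=> Rbc cC; by rewrite ((pwP _ pB) b c bB (subsetP CB c cC) Rbc).
Qed.

Lemma rank_ex (X : {set T}) : exists2 I, pw I && (I \subset X) & rank R X = #|I|.
Proof.
have h : 0 < #|[pred I : {set T} | indep R I && (I \subset X)]|.
  apply/card_gt0P; exists set0; rewrite inE indep_pw sub0set andbT.
  by apply/pwP=> x y; rewrite inE.
case: (eq_bigmax_cond (fun I : {set T} => #|I|) h) => I; rewrite inE indep_pw => HI E.
by exists I.
Qed.

Lemma rank_ge (I X : {set T}) : pw I -> I \subset X -> #|I| <= rank R X.
Proof. by move=> pI IX; apply: leq_bigmax_cond; rewrite indep_pw pI IX. Qed.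

Lemma rank_mono (X Y : {set T}) : X \subset Y -> rank R X <= rank R Y.
Proof.
move=> XY; case: (rank_ex X) => I /andP[pI IX] ->.
by apply: rank_ge => //; apply: subset_trans XY.
Qed.

Lemma closureE (X : {set T}) : Defs.closure R X = upper_approx R X.
Proof.
apply/setP=> e; rewrite !inE.
case: (boolP [exists x in X, R e x]) => [/existsP[x /andP[xX Rex]]|Hn].
- have -> : RN R e :&: X != set0 by apply/set0Pn; exists x; rewrite !inE Rex xX.
  rewrite eqn_leq rank_mono ?subsetUr //=.
  case: (rank_ex (e |: X)) => I /andP[pI IX] ->.
  case: (boolP (e \in I)) => eI; last first.
    apply: rank_ge => //; apply/subsetP=> z zI.
    by move: (subsetP IX z zI); rewrite !inE => /orP[/eqP ze|//]; move: eI; rewrite -ze zI.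
  case: (boolP (x \in I)) => xI.
    have ex : e = x by apply: (pwP _ pI).
    subst x; apply: rank_ge => //; apply/subsetP=> z zI.
    by move: (subsetP IX z zI); rewrite !inE => /orP[/eqP ->|//].
  have -> : #|I| = #|x |: (I :\ e)|.
    by rewrite cardsU1 in_setD1 (negbTE xI) andbF (cardsD1 e I) eI.
  apply: rank_ge.
    apply/pwP=> a b; rewrite !inE.
    have key : forall a, a \in I -> a != e -> R x a -> False.
      move=> a0 aI ane Rxa; move/eqP: ane; apply.
      apply: (pwP _ pI) => //; by rewrite Rsym; apply: Rtrans Rex Rxa.
    move=> /orP[/eqP->|/andP[ane aI]] /orP[/eqP->|/andP[bne bI]] Rab //.
    + by case: (key b bI bne Rab).
    + by case: (key a aI ane); rewrite Rsym.
    + exact: (pwP _ pI).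
  apply/subsetP=> z; rewrite !inE => /orP[/eqP->//|/andP[ze zI]].
  by move: (subsetP IX z zI); rewrite !inE (negbTE ze).
- have -> : (RN R e :&: X != set0) = false.
    apply/negbTE/negPn/eqP/setP=> y; rewrite !inE.
    apply/negP=> /andP[Rey yX]; move/existsP: Hn; apply; exists y; by rewrite yX.
  have eX : e \notin X by apply/negP=> eX; move/existsP: Hn; apply; exists e; rewrite eX Rrefl.
  case: (rank_ex X) => I /andP[pI IX] ->.
  have eI : e \notin I by apply/negP=> /(subsetP IX); rewrite (negbTE eX).
  apply/negbTE; rewrite neq_ltn; apply/orP; left.
  suff : #|e |: I| <= rank R (e |: X) by rewrite cardsU1 eI.
  apply: rank_ge; last by apply: setUS.
  apply/pwP=> a b; rewrite !inE.
  have key : forall a, a \in I -> R e a -> False.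
    move=> a0 aI Rea; move/existsP: Hn; apply; exists a0; by rewrite (subsetP IX a0 aI) Rea.
  move=> /orP[/eqP->|aI] /orP[/eqP->|bI] Rab //.
  + by case: (key b bI Rab).
  + by case: (key a aI); rewrite Rsym.
  + exact: (pwP _ pI).
Qed.

End S.

Theorem corollary5 (T : finType) (R : rel T)
  (hne : 0 < #|T|)
  (Rrefl : reflexive R) (Rsym : symmetric R) (Rtrans : transitive R) :
  forall X : {set T}, ~~ M_closed R X <-> R_rough R X.
Proof.
move=> X; rewrite /M_closed /R_rough /R_precise closureE //.
have lowX : lower_approx R X \subset X.
  apply/subsetP=> x; rewrite inE => /subsetP; apply; by rewrite inE Rrefl.
have Xup : X \subset upper_approx R X.
  apply/subsetP=> x xX; rewrite inE; apply/set0Pn; exists x; by rewrite !inE Rrefl xX.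
suff -> : (upper_approx R X == X) = (upper_approx R X == lower_approx R X) by [].
apply/eqP/eqP => H.
- rewrite H; apply/eqP; rewrite eq_sym eqEsubset lowX /=.
  apply/subsetP=> x xX; rewrite inE; apply/subsetP=> y; rewrite inE => Rxy.
  rewrite -H inE; apply/set0Pn; exists x; by rewrite !inE Rsym Rxy xX.
- apply/eqP; rewrite eqEsubset Xup andbT; by rewrite H.
Qed.
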